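(* Let $M$ be a universal left-c.e. semi-measure and $\mathcal S$ the collection of all left-c.e. semi-measures. There is a left-c.e. semi-measure $\widetilde M$ that is not universal such that $\mathsf{MLR}_{\widetilde M}=\mathsf{MLR}_M=\bigcup_{\rho\in\mathcal S}\mathsf{MLR}_\rho$.
   Context: $2^{<\omega}$ is the set of finite binary strings, $\varepsilon$ the empty string, $[\![\sigma]\!]=\{X\in2^\omega:\sigma\preceq X\}$, $[\![S]\!]=\bigcup_{\sigma\in S}[\![\sigma]\!]$. A semi-measure is $\rho:2^{<\omega}\to[0,1]$ with $\rho(\varepsilon)=1$ and $\rho(\sigma)\ge\rho(\sigma0)+\rho(\sigma1)$; it is left-c.e. if its values are uniformly approximable from below by a computable, non-decreasing sequence of rationals. A left-c.e. semi-measure $M$ is universal if for every left-c.e. semi-measure $\rho$ there is $c\in\omega$ with $\rho(\sigma)\le c\cdot M(\sigma)$ for all $\sigma$. For $E\subseteq2^{<\omega}$, $\rho(E)=\sum_{\sigma\in E}\rho(\sigma)$. $X\in\mathsf{MLR}_\rho$ iff $X\notin\bigcap_i[\![U_i]\!]$ for every uniformly c.e. sequence $(U_i)$ of subsets of $2^{<\omega}$ with $\rho(U_i)\le2^{-i}$ for all $i$. *)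

(* Defs.v *)
From HB Require Import structures.
From mathcomp Require Import all_boot all_order all_algebra.
From mathcomp Require Import all_classical all_reals.
From mathcomp Require Import ereal esum.
Set Implicit Arguments. Unset Strict Implicit. Unset Printing Implicit Defensive.
Import Order.TTheory GRing.Theory Num.Theory.
Local Open Scope ring_scope.

(* A concrete model of partial computable functions on nat:            *)
(* unary partial recursive functions with Cantor pairing.              *)

(* Cantor unpairing: enumerates (0,0),(1,0),(0,1),(2,0),(1,1),(0,2),... *)
Fixpoint unpair (n : nat) : nat * nat :=
  match n with
  | 0 => (0, 0)
  | n'.+1 => let: (a, b) := unpair n' in
             if a is a'.+1 then (a', b.+1) else (b.+1, 0)
  end.

Definition npair (a b : nat) : nat := ((a + b) * (a + b).+1) %/ 2 + b.

Inductive prog : Type :=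
  | PZero : prog
  | PSucc : prog
  | PFst  : prog
  | PSnd  : prog
  | PComp : prog -> prog -> prog
  | PPair : prog -> prog -> prog
  | PRec  : prog -> prog -> prog    (* h <a,0> = f a ; h <a,n+1> = g <a,<n, h <a,n>>> *)
  | PMu   : prog -> prog.           (* <a> |-> least m with f <a,m> = 0 (all earlier defined) *)

(* Fuel-bounded evaluation; [None] means "not (yet) converged". *)
Fixpoint eval (k : nat) (p : prog) (x : nat) {struct k} : option nat :=
  match k with
  | 0 => None
  | k'.+1 =>
    match p with
    | PZero => Some 0
    | PSucc => Some x.+1
    | PFst => Some (unpair x).1
    | PSnd => Some (unpair x).2
    | PComp f g => obind (eval k' f) (eval k' g x)
    | PPair f g =>
        match eval k' f x, eval k' g x with
        | Some a, Some b => Some (npair a b)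
        | _, _ => None
        end
    | PRec f g =>
        let a := (unpair x).1 in
        (fix loop (i : nat) : option nat :=
           match i with
           | 0 => eval k' f a
           | i'.+1 => obind (fun r => eval k' g (npair a (npair i' r))) (loop i')
           end) (unpair x).2
    | PMu f =>
        (fix search (j m : nat) : option nat :=
           match j with
           | 0 => None
           | j'.+1 =>
               match eval k' f (npair x m) with
               | Some 0 => Some m
               | Some _ => search j' m.+1
               | None => None
               end
           end) k' 0
    end
  end.

Definition computes (p : prog) (f : nat -> nat) : Prop :=
  forall x, exists k, eval k p x = Some (f x).

Definition computable (f : nat -> nat) : Prop := exists p, computes p f.

(* finite binary strings = seq bool; sigma0 = rcons sigma false *)
Definition bstring := seq bool.

(* bijective base-2 coding of strings *)
Fixpoint code (s : bstring) : nat :=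
  match s with
  | [::] => 0
  | b :: s' => (code s').*2 + 1 + b
  end.

(* decoding of naturals as rationals (surjective onto rat) *)
Definition int_of_nat (a : nat) : int :=
  if odd a then - (a./2.+1)%:Z else (a./2)%:Z.
Definition rat_of_nat (n : nat) : rat :=
  (int_of_nat (unpair n).1)%:~R / ((unpair n).2.+1)%:R.

Definition prefix (s : bstring) (X : nat -> bool) : Prop :=
  forall i, (i < size s)%N -> nth false s i = X i.

Definition in_cyl (U : set bstring) (X : nat -> bool) : Prop :=
  exists2 s, U s & prefix s X.

Definition semimeasure (R : realType) (rho : bstring -> R) : Prop :=
  (forall s, 0 <= rho s <= 1) /\
  rho [::] = 1 /\
  (forall s, rho (rcons s false) + rho (rcons s true) <= rho s).

Definition left_ce (R : realType) (rho : bstring -> R) : Prop :=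
  exists f : nat -> nat, computable f /\
    let q := fun s t => rat_of_nat (f (npair (code s) t)) in
    (forall s t, q s t <= q s t.+1) /\
    (forall s (eps : R), 0 < eps ->
       exists N, forall t, (N <= t)%N -> `|rho s - ratr (q s t)| < eps).

Definition left_ce_semimeasure (R : realType) (rho : bstring -> R) : Prop :=
  semimeasure rho /\ left_ce rho.

Definition universal (R : realType) (M : bstring -> R) : Prop :=
  forall rho : bstring -> R, left_ce_semimeasure rho ->
    exists c : nat, forall s, rho s <= c%:R * M s.

Definition measE (R : realType) (rho : bstring -> R) (E : set bstring) : \bar R :=
  (\esum_(s in E) (rho s)%:E)%R.

Definition unif_ce (U : nat -> set bstring) : Prop :=
  exists p : prog, forall i s,
    U i s <-> exists k y, eval k p (npair i (code s)) = Some y.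

Definition MLR (R : realType) (rho : bstring -> R) (X : nat -> bool) : Prop :=
  forall U : nat -> set bstring, unif_ce U ->
    (forall i, (measE rho (U i) <= ((2%:R : R) ^- i)%:E)%E) ->
    ~ (forall i, in_cyl (U i) X).

(* Main.v *)
Require Import Defs.
From mathcomp Require Import all_boot all_order all_algebra.
From mathcomp Require Import all_classical all_reals.
From mathcomp Require Import ereal esum.
From mathcomp Require Import zify.
Import Order.TTheory GRing.Theory Num.Theory.
Set Implicit Arguments. Unset Strict Implicit. Unset Printing Implicit Defensive.
Local Notation eval := Defs.eval.
Local Notation code := Defs.code.
Local Notation prefix := Defs.prefix.

Lemma tri_succ d : (d.+1 * d.+2) %/ 2 = (d * d.+1) %/ 2 + d.+1.
Proof.
have -> : (d.+1 * d.+2 = d.+1 * 2 + d * d.+1)%N by rewrite mulnC; lia.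
by rewrite divnMDl // addnC.
Qed.

Lemma npair_S1 a b : npair a b.+1 = (npair a.+1 b).+1.
Proof. by rewrite /npair addnS addSn addnS. Qed.

Lemma npair_S0 b : npair b.+1 0 = (npair 0 b).+1.
Proof. rewrite /npair !add0n !addn0 tri_succ; lia. Qed.

Lemma unpair_npair a b : unpair (npair a b) = (a, b).
Proof.
move: {2}(a + b) (erefl (a + b)) => s; elim: s a b.
  by case=> [|a] [|b].
move=> s IH a b; elim: b a => [|b IHb] a E.
  case: a E => [|a] E; first by [].
  rewrite npair_S0 /= (IH 0%N a) //; lia.
rewrite npair_S1 /= IHb //; lia.
Qed.

Lemma npair_unpair n : npair (unpair n).1 (unpair n).2 = n.
Proof.
elim: n => [//|n IH] /=.
case E: (unpair n) => [[|a] b]; rewrite E /= in IH.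
  by rewrite npair_S0 IH.
by rewrite npair_S1 IH.
Qed.

Fixpoint loopF (E : prog -> nat -> option nat) (f g : prog) (a i : nat) : option nat :=
  match i with 0 => E f a
  | i'.+1 => obind (fun r => E g (npair a (npair i' r))) (loopF E f g a i') end.

Fixpoint searchF (E : prog -> nat -> option nat) (f : prog) (x j m : nat) : option nat :=
  match j with 0 => None
  | j'.+1 => match E f (npair x m) with
             | Some 0 => Some m
             | Some _ => searchF E f x j' m.+1
             | None => None end end.

Lemma eval_rec k f g x :
  eval k.+1 (PRec f g) x = loopF (eval k) f g (unpair x).1 (unpair x).2.
Proof. by rewrite /=; elim: (unpair x).2 => //= i ->. Qed.

Lemma eval_mu k f x : eval k.+1 (PMu f) x = searchF (eval k) f x k 0.
Proof.
rewrite /= -[0%R]/0%N; move: {2 4}k 0%N; elim=> //= j IH m.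
by case: (eval k f (npair x m)) => // -[|n] //; rewrite IH.
Qed.

Lemma eval_comp k f g x : eval k.+1 (PComp f g) x = obind (eval k f) (eval k g x).
Proof. by []. Qed.
Lemma eval_pair k f g x : eval k.+1 (PPair f g) x =
  match eval k f x, eval k g x with Some a, Some b => Some (npair a b) | _, _ => None end.
Proof. by []. Qed.

Definition Emono (E E' : prog -> nat -> option nat) :=
  forall p x y, E p x = Some y -> E' p x = Some y.

Lemma loopF_mono E E' f g a i y : Emono E E' ->
  loopF E f g a i = Some y -> loopF E' f g a i = Some y.
Proof.
move=> H; elim: i y => [|i IH] y /=; first exact: H.
case E1: (loopF E f g a i) => [r|] //= Hg.
by rewrite (IH _ E1) /=; apply: H.
Qed.

Lemma searchF_mono E E' f x j j' m y : Emono E E' -> (j <= j')%N ->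
  searchF E f x j m = Some y -> searchF E' f x j' m = Some y.
Proof.
move=> H; elim: j j' m => [//|j IH] [//|j'] m /= jj.
case E1: (E f (npair x m)) => [[|n]|] //; rewrite (H _ _ _ E1) //.
exact: IH.
Qed.

Lemma eval_mono k p x y : eval k p x = Some y -> eval k.+1 p x = Some y.
Proof.
elim: k p x y => [//|k IH] p x y.
have HE : Emono (eval k) (eval k.+1) by move=> ???; apply: IH.
case: p => [|||| f g | f g | f g | f].
- by [].
- by [].
- by [].
- by [].
- rewrite !eval_comp.
  case E1: (eval k g x) => [z|] // E2.
  by rewrite (IH _ _ _ E1); apply: IH.
- rewrite !eval_pair.
  case E1: (eval k f x) => [u|] //; case E2: (eval k g x) => [v|] //.
  by rewrite (IH _ _ _ E1) (IH _ _ _ E2).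
- rewrite !eval_rec; exact: loopF_mono.
- rewrite !eval_mu; exact: searchF_mono.
Qed.

Lemma eval_monoL k k' p x y : (k <= k')%N -> eval k p x = Some y -> eval k' p x = Some y.
Proof.
move=> /subnK <-; elim: (k' - k)%N => [//|n IH] H.
by rewrite addSn; apply: eval_mono; apply: IH.
Qed.

Lemma Emono_le k k' : (k <= k')%N -> Emono (eval k) (eval k').
Proof. by move=> kk p x y; apply: eval_monoL. Qed.

Lemma c_ext f g : (forall x, f x = g x) -> computable f -> computable g.
Proof. by move=> e [p Hp]; exists p => x; rewrite -e. Qed.

Lemma c_zero : computable (fun _ => 0%N).
Proof. by exists PZero => x; exists 1%N. Qed.
Lemma c_succ : computable S.
Proof. by exists PSucc => x; exists 1%N. Qed.
Lemma c_fst : computable (fun x => (unpair x).1).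
Proof. by exists PFst => x; exists 1%N. Qed.
Lemma c_snd : computable (fun x => (unpair x).2).
Proof. by exists PSnd => x; exists 1%N. Qed.

Lemma c_comp f g : computable f -> computable g -> computable (fun x => f (g x)).
Proof.
move=> [pf Hf] [pg Hg]; exists (PComp pf pg) => x.
have [kg Eg] := Hg x; have [kf Ef] := Hf (g x).
exists (maxn kf kg).+1; rewrite eval_comp (eval_monoL _ Eg) ?leq_maxr //=.
by rewrite (eval_monoL _ Ef) ?leq_maxl.
Qed.

Lemma c_pair f g : computable f -> computable g -> computable (fun x => npair (f x) (g x)).
Proof.
move=> [pf Hf] [pg Hg]; exists (PPair pf pg) => x.
have [kg Eg] := Hg x; have [kf Ef] := Hf x.
exists (maxn kf kg).+1; rewrite eval_pair (eval_monoL _ Eg) ?leq_maxr //=.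
by rewrite (eval_monoL _ Ef) ?leq_maxl.
Qed.

Fixpoint iterH (f g : nat -> nat) (a i : nat) : nat :=
  match i with 0 => f a | i'.+1 => g (npair a (npair i' (iterH f g a i'))) end.

Lemma c_rec f g : computable f -> computable g ->
  computable (fun x => iterH f g (unpair x).1 (unpair x).2).
Proof.
move=> [pf Hf] [pg Hg]; exists (PRec pf pg) => x.
suff [k Hk] : exists k, loopF (eval k) pf pg (unpair x).1 (unpair x).2 =
   Some (iterH f g (unpair x).1 (unpair x).2) by exists k.+1; rewrite eval_rec.
elim: (unpair x).2 => [|i [k Hk]] /=; first exact: Hf.
have [k2 E2] := Hg (npair (unpair x).1 (npair i (iterH f g (unpair x).1 i))).
exists (maxn k k2).
rewrite (loopF_mono (Emono_le (leq_maxl k k2)) Hk) /=.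
by rewrite (eval_monoL _ E2) ?leq_maxr.
Qed.

Lemma c_bin (B : nat -> nat -> nat) f g :
  computable (fun x => B (unpair x).1 (unpair x).2) ->
  computable f -> computable g -> computable (fun x => B (f x) (g x)).
Proof.
move=> HB Hf Hg; apply: c_ext (c_comp HB (c_pair Hf Hg)) => x.
by rewrite unpair_npair.
Qed.

Lemma c_id : computable (fun x => x).
Proof. by apply: c_ext (c_pair c_fst c_snd) => x; rewrite npair_unpair. Qed.

Lemma c_const n : computable (fun _ => n).
Proof. elim: n => [|n IH]; [exact: c_zero | exact: c_comp c_succ IH]. Qed.

Lemma c_addn_const f n : computable f -> computable (fun x => f x + n)%N.
Proof.
move=> Hf; elim: n => [|n IH]; first by apply: c_ext Hf => x; rewrite addn0.
by apply: c_ext (c_comp c_succ IH) => x; rewrite addnS.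
Qed.

Lemma c_add f g : computable f -> computable g -> computable (fun x => f x + g x)%N.
Proof.
apply: c_bin; apply: c_ext (c_rec c_id (c_comp c_succ (c_comp c_snd c_snd))) => x.
elim: (unpair x).2 => [|i IH] /=; first by rewrite addn0.
by rewrite !unpair_npair /= IH addnS.
Qed.

Lemma c_mul f g : computable f -> computable g -> computable (fun x => f x * g x)%N.
Proof.
apply: c_bin.
apply: c_ext (c_rec c_zero (c_add (c_comp c_snd c_snd) c_fst)) => x.
elim: (unpair x).2 => [|i IH] /=; first by rewrite muln0.
by rewrite !unpair_npair /= IH mulnS addnC.
Qed.

Lemma c_pred f : computable f -> computable (fun x => (f x).-1).
Proof.
apply: (c_bin (B := fun _ n => n.-1)) (c_zero).
apply: c_ext (c_rec c_zero (c_comp c_fst c_snd)) => x.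
by case: (unpair x).2 => [|i] //=; rewrite !unpair_npair.
Qed.

Lemma c_sub f g : computable f -> computable g -> computable (fun x => f x - g x)%N.
Proof.
apply: c_bin.
apply: c_ext (c_rec c_id (c_pred (c_comp c_snd c_snd))) => x.
elim: (unpair x).2 => [|i IH] /=; first by rewrite subn0.
by rewrite !unpair_npair /= IH subnS.
Qed.

Lemma c_ifz c u v : computable c -> computable u -> computable v ->
  computable (fun x => if c x == 0%N then u x else v x).
Proof.
move=> Hc Hu Hv.
have H : computable (fun x => iterH (fun a => (unpair a).1) (fun w => (unpair (unpair w).1).2)
            (unpair x).1 (unpair x).2) by apply: c_rec; [exact: c_fst | exact: c_comp c_snd c_fst].
apply: c_ext (c_bin H (c_pair Hu Hv) Hc) => x.
by case: (c x) => [|i] /=; rewrite !unpair_npair.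
Qed.

Lemma c_eqn f g : computable f -> computable g ->
  computable (fun x => if f x == g x then 0%N else 1%N).
Proof.
move=> Hf Hg; apply: c_ext (c_ifz (c_add (c_sub Hf Hg) (c_sub Hg Hf)) c_zero (c_const 1)) => x.
case: ifP; case: ifP => //; lia.
Qed.

Lemma c_pow2 f : computable f -> computable (fun x => 2 ^ f x)%N.
Proof.
apply: (c_bin (B := fun _ n => 2 ^ n)%N) c_zero.
apply: c_ext (c_rec (c_const 1) (c_add (c_comp c_snd c_snd) (c_comp c_snd c_snd))) => x.
elim: (unpair x).2 => [|i IH] //=.
by rewrite !unpair_npair /= IH expnS; lia.
Qed.

Lemma c_odd f : computable f -> computable (fun x => odd (f x) : nat).
Proof.
apply: (c_bin (B := fun _ n => odd n : nat)) c_zero.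
apply: c_ext (c_rec c_zero (c_sub (c_const 1) (c_comp c_snd c_snd))) => x.
elim: (unpair x).2 => [|i IH] //=.
by rewrite !unpair_npair /= IH; case: (odd i).
Qed.

Lemma c_half f : computable f -> computable (fun x => (f x)./2).
Proof.
apply: (c_bin (B := fun _ n => n./2)) c_zero.
apply: c_ext (c_rec c_zero (c_add (c_comp c_snd c_snd) (c_odd (c_comp c_fst c_snd)))) => x.
elim: (unpair x).2 => [|i IH] //=.
by rewrite !unpair_npair /= IH uphalf_half addnC.
Qed.

Definition stepw (w : nat) : nat :=
  if odd (unpair w).1 || ((unpair w).1 == 0%N) then w
  else npair (unpair w).1./2 ((unpair w).2.*2).

Lemma c_stepw f : computable f -> computable (fun x => stepw (f x)).
Proof.
move=> Hf.
have Hz := c_comp c_fst Hf; have Hp := c_comp c_snd Hf.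
apply: c_ext (c_ifz (c_add (c_odd Hz) (c_sub (c_const 1) (c_eqn Hz c_zero)))
   (c_pair (c_half Hz) (c_add Hp Hp)) Hf) => x.
rewrite /stepw -addnn; case: (unpair (f x)).1 => [|z] //=; case: (odd z) => //=.
Qed.

Definition decomp (y : nat) : nat := iter y stepw (npair y 1).

Lemma c_decomp f : computable f -> computable (fun x => decomp (f x)).
Proof.
move=> Hf; apply: (c_bin (B := fun a _ => decomp a) _ Hf c_zero).
have H := c_rec (c_pair c_id (c_const 1)) (c_stepw (c_comp c_snd c_snd)).
apply: c_ext (c_bin H c_fst c_fst) => x.
rewrite /decomp /=.
elim: {2 3}(unpair x).1 => [|i IH] //=.
by rewrite !unpair_npair /= IH.
Qed.

Lemma iter_stepw k m o P : odd o ->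
  iter k stepw (npair (2 ^ m * o) P) = npair (2 ^ (m - k) * o) (P * 2 ^ (minn k m)).
Proof.
move=> oo; elim: k => [|k IH] /=; first by rewrite subn0 min0n expn0 muln1.
rewrite IH /stepw unpair_npair /=.
case: (leqP m k) => mk.
  have -> : (m - k = 0)%N by apply/eqP; rewrite subn_eq0.
  have -> : (m - k.+1 = 0)%N by apply/eqP; rewrite subn_eq0 ltnW // ltnS.
  by rewrite expn0 mul1n oo /= (minn_idPr (leqW mk)).
have -> : (m - k = (m - k.+1).+1)%N by lia.
rewrite expnS -mulnA oddM /=.
have -> : (2 * (2 ^ (m - k.+1) * o) == 0)%N = false.
  by rewrite muln_eq0 /= muln_eq0 expn_eq0 /=; apply/eqP => o0; rewrite o0 in oo.
rewrite (minn_idPl mk) expnS mul2n half_double -muln2; congr npair; lia.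
Qed.

Lemma decomp_spec m o : odd o -> decomp (2 ^ m * o) = npair o (2 ^ m).
Proof.
move=> oo; rewrite /decomp iter_stepw //.
have mle : (m <= 2 ^ m * o)%N.
  by apply: leq_trans (ltnW (ltn_expl m (isT : 1 < 2)))%N _; rewrite leq_pmulr //; case: o oo.
by rewrite (minn_idPr mle) mul1n (_ : m - _ = 0)%N ?expn0 ?mul1n //; apply/eqP; rewrite subn_eq0.
Qed.
Lemma determ p f k x y : computes p f -> eval k p x = Some y -> y = f x.
Proof.
move=> Hp E; have [k2 E2] := Hp x.
have := eval_monoL (leq_maxl k k2) E; rewrite (eval_monoL (leq_maxr k k2) E2).
by case.
Qed.

Lemma searchF_some E f x j m r : searchF E f x j m = Some r -> E f (npair x r) = Some 0%N.
Proof.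
elim: j m => [//|j IH] m /=.
case E1: (E f (npair x m)) => [[|n]|] //; last exact: IH.
by case=> <-.
Qed.

Lemma searchF_S E f x j m : searchF E f x j.+1 m =
  match E f (npair x m) with Some 0 => Some m | Some _ => searchF E f x j m.+1 | None => None end.
Proof. by []. Qed.

Lemma dom_transform p g d : computable g -> computable d ->
  exists p', forall x, (exists k y, eval k p' x = Some y) <->
                       (d x = 0%N /\ exists k y, eval k p (g x) = Some y).
Proof.
move=> [pG HG] HD0.
have [pD HD] : computable (fun w => d (unpair w).1) by apply: c_comp HD0 c_fst.
exists (PComp p (PComp PFst (PPair pG (PMu pD)))) => x; split.
  move=> [[|k1] [y]]; first by [].
  rewrite eval_comp.
  case E1: (eval k1 (PComp PFst _) x) => [z|] // Ey.
  case: k1 E1 Ey => [//|k2] E1 Ey; rewrite eval_comp in E1.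
  case E2: (eval k2 (PPair _ _) x) E1 => [w|] // Ez.
  case: k2 E2 Ez Ey => [//|k3] E2 Ez Ey; rewrite eval_pair in E2.
  case E3: (eval k3 pG x) E2 => [a|] //; case E4: (eval k3 (PMu pD) x) => [b|] // [Ew].
  case: k3 E3 E4 Ez Ey => [//|k4] E3 E4 Ez Ey; rewrite eval_mu in E4.
  move/searchF_some: E4 => E5.
  have := determ HD E5; rewrite unpair_npair /= => d0.
  split => //; exists k4.+3, y.
  have Hz : z = g x.
    move: Ez => /= [<-]; rewrite -Ew unpair_npair /=.
    exact: determ HG E3.
  by rewrite -Hz.
move=> [d0 [k [y Ey]]].
have [kG EG] := HG x; have [kD ED] := HD (npair x 0).
rewrite unpair_npair /= d0 in ED.
have [K [h1 h2 h3]] : exists K, [/\ (k <= K)%N, (kG <= K)%N & (kD <= K)%N].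
  by exists (maxn k (maxn kG kD)); split; lia.
exists K.+4.+1, y; rewrite eval_comp eval_comp eval_pair.
rewrite (eval_monoL _ EG); last by lia.
rewrite eval_mu searchF_S (eval_monoL _ ED); last by lia.
change (obind (eval K.+4 p) (Some (unpair (npair (g x) 0)).1) = Some y).
rewrite unpair_npair; change (eval K.+4 p (g x) = Some y).
by apply: (eval_monoL _ Ey); lia.
Qed.

Fixpoint lz (s : bstring) : nat := if s is false :: s' then (lz s').+1 else 0.
Fixpoint dz (s : bstring) : bstring := if s is false :: s' then dz s' else s.

Lemma code_cons b s : code (b :: s) = ((code s).*2 + 1 + b)%N.
Proof. by []. Qed.

Lemma code0 s : code s = 0%N -> s = [::].
Proof. by case: s => // b s; rewrite code_cons; lia. Qed.

Lemma code_lz s : (code s).+1 = (2 ^ (lz s) * (code (dz s)).+1)%N.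
Proof.
elim: s => [//|[] s IH]; first by rewrite /= mul1n.
rewrite code_cons [lz _]/= [dz _]/= expnS -mulnA -IH; lia.
Qed.

Lemma odd_dz s : odd (code (dz s)).+1.
Proof.
elim: s => [//|[] s IH] //.
rewrite [dz _]/= code_cons.
rewrite (_ : (((code s).*2 + 1 + true).+1 = ((code s).+1).*2 + 1)%N).
  by rewrite addn1 /= odd_double.
by rewrite -!muln2 /=; lia.
Qed.

Lemma decomp_code s : decomp (code s).+1 = npair (code (dz s)).+1 (2 ^ (lz s)).
Proof. by rewrite code_lz decomp_spec // odd_dz. Qed.

Definition Pc (n c : nat) : bool :=
  ((unpair (decomp c.+1)).1 == 1%N) || ((unpair (decomp c.+1)).2 == 2 ^ n)%N.

Lemma Pc_code n s : Pc n (code s) = (dz s == [::]) || (lz s == n).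
Proof.
rewrite /Pc decomp_code unpair_npair /= eqSS eqn_exp2l //.
congr orb; apply/eqP/eqP => [/code0 //| ->] //.
Qed.

Lemma c_Pc n f : computable f -> computable (fun x => if Pc n (f x) then 0%N else 1%N).
Proof.
move=> Hf.
have Hd := c_decomp (c_comp c_succ Hf).
have H1 := c_eqn (c_comp c_fst Hd) (c_const 1).
have H2 := c_eqn (c_comp c_snd Hd) (c_const (2 ^ n)).
apply: c_ext (c_ifz H1 c_zero H2) => x.
rewrite /Pc; case: (_ == 1%N) => //=.
Qed.

Lemma dz_rcons s b : dz s != [::] -> dz (rcons s b) != [::] /\ lz (rcons s b) = lz s.
Proof. by elim: s => [//|[] s IH] //= /IH [-> ->]. Qed.

From mathcomp Require Import ring lra.
Local Open Scope ring_scope.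

Lemma esum_bound (R : realType) (T : choiceType) (a b : T -> R) (V U : set T) (K : R) :
  0 <= K -> (forall s, V s -> U s) -> (forall s, 0 <= b s) ->
  (forall s, V s -> a s <= K * b s) ->
  (\esum_(s in V) (a s)%:E <= K%:E * \esum_(s in U) (b s)%:E)%E.
Proof.
move=> K0 VU b0 ab; apply: ge_ereal_sup => _ [X [finX XV] <-].
apply: (@le_trans _ _ (\sum_(s \in X) ((K * b s)%:E))%E).
  by apply: lee_fsum => // s Xs; rewrite lee_fin; apply: ab; apply: XV.
rewrite (_ : (\sum_(s \in X) (K * b s)%:E = \sum_(s \in X) (K%:E * (b s)%:E))%E); last first.
  by apply: eq_fsbigr => s _; rewrite EFinM.
rewrite -ge0_mule_fsumr; last by move=> s; rewrite lee_fin.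
apply: lee_wpmul2l; first by rewrite lee_fin.
by apply: ereal_sup_ubound; exists X => //; split => // s /XV /VU.
Qed.

Lemma pow2_le (R : realType) n i : ((2 ^ n)%:R * ((2%:R : R) ^- (i + n)) = (2%:R : R) ^- i).
Proof.
rewrite natrX exprD invfM mulrCA mulrV ?mulr1 //.
by rewrite unitfE expf_neq0 // pnatr_eq0.
Qed.

Lemma MLR_transfer (R : realType) (rho nu : bstring -> R) (n : nat) (Q : nat -> bool)
  (X : nat -> bool) :
  computable (fun c => if Q c then 0%N else 1%N) ->
  (forall s, 0 <= rho s) ->
  (forall s, Q (code s) -> nu s <= (2 ^ n)%:R * rho s) ->
  (forall s, prefix s X -> Q (code s)) ->
  MLR nu X -> MLR rho X.
Proof.
move=> HQ rho0 le pre Hnu U [p Hp] Hm Hc.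
have Hg : computable (fun x => npair ((unpair x).1 + n) (unpair x).2)
  by apply: c_pair (c_addn_const n c_fst) c_snd.
have Hd : computable (fun x => if Q (unpair x).2 then 0%N else 1%N) by apply: c_comp HQ c_snd.
have [p' Hp'] := dom_transform p Hg Hd.
apply: (Hnu (fun i s => U (i + n)%N s /\ Q (code s))).
- exists p' => i s; rewrite Hp' !unpair_npair /= -Hp.
  by split => [[? ?]|[]]; [split => //; rewrite ifT | case: ifP].
- move=> i; apply: le_trans (esum_bound (U := U (i + n)%N) (K := (2 ^ n)%:R) _ _ rho0 _) _.
  + by rewrite ler0n.
  + by move=> s [].
  + by move=> s [_]; apply: le.
  apply: le_trans (lee_wpmul2l _ (Hm (i + n)%N)) _; first by rewrite lee_fin ler0n.
  by rewrite -EFinM pow2_le.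
- move=> i; have [s Us ps] := Hc (i + n)%N; exists s => //; split => //.
  exact: pre.
Qed.

Lemma rat_npair a b : rat_of_nat (npair a b) = (int_of_nat a)%:~R / (b.+1)%:R.
Proof. by rewrite /rat_of_nat unpair_npair. Qed.

Lemma code_rcons s b : code (rcons s b) = (code s + (1 + b) * 2 ^ size s)%N.
Proof.
elim: s => [|c s IH]; first by case: b.
by rewrite rcons_cons code_cons IH code_cons /= expnS; lia.
Qed.

Lemma code_lt s : ((code s).+1 < 2 ^ (size s).+1)%N.
Proof.
elim: s => [//|c s IH]; rewrite code_cons /= expnS.
by case: c => /=; lia.
Qed.

Lemma inv_sq_ineq (R : realFieldType) (x a : R) : 0 < x -> x < 2 * a ->
  ((x + a) ^+ 2)^-1 + ((x + 2 * a) ^+ 2)^-1 <= (x ^+ 2)^-1.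
Proof.
move=> x0 xa.
have a0 : 0 < a by nra.
have h1 : ((x + a) ^+ 2)^-1 <= (2 * x ^+ 2)^-1.
  rewrite lef_pV2 ?posrE; [nra | nra | nra].
have h2 : ((x + 2 * a) ^+ 2)^-1 <= (2 * x ^+ 2)^-1.
  rewrite lef_pV2 ?posrE; [nra | nra | nra].
apply: le_trans (lerD h1 h2) _.
rewrite invfM -mulrDl (_ : 2^-1 + 2^-1 = 1 :> R) ?mul1r //.
by field.
Qed.

Definition rho0 (R : realType) (s : bstring) : R := (((code s).+1 ^ 2)%N%:R)^-1.

Lemma rho0_gt0 (R : realType) s : 0 < rho0 R s.
Proof. by rewrite /rho0 invr_gt0 ltr0n expn_gt0. Qed.

Lemma rho0_semi (R : realType) : semimeasure (rho0 R).
Proof.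
split; [|split].
- move=> s; rewrite (ltW (rho0_gt0 _ _)) /= /rho0 invf_le1 ?ltr0n ?expn_gt0 //.
  by rewrite ler1n expn_gt0.
- by rewrite /rho0 /= invr1.
- move=> s; rewrite /rho0 !code_rcons /= !natrX.
  have := code_lt s; rewrite expnS.
  set c := code s; set A := (2 ^ size s)%N => cA.
  have -> : ((c + (1 + 0) * A).+1 = c.+1 + A)%N by lia.
  have -> : ((c + (1 + 1) * A).+1 = c.+1 + 2 * A)%N by lia.
  rewrite !natrD addr0 (_ : A%:R + A%:R = 2 * A%:R :> R); last by ring.
  apply: inv_sq_ineq; first by rewrite ltr0n.
  by rewrite -natrM ltr_nat; lia.
Qed.

Lemma rho0_lce (R : realType) : left_ce_semimeasure (rho0 R).
Proof.
split; first exact: rho0_semi.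
pose f0 x := npair 2 (((unpair x).1.+1 * (unpair x).1.+1).-1).
have Hq : forall s t, rat_of_nat (f0 (npair (code s) t)) = (((code s).+1 ^ 2)%N%:R)^-1.
  move=> s t; rewrite /f0 unpair_npair rat_npair prednK ?muln_gt0 //.
  rewrite (_ : int_of_nat 2 = 1) // mul1r (_ : ((code s).+1 ^ 2 = (code s).+1 * (code s).+1)%N) //.
exists f0; split.
  rewrite /f0; apply: c_pair; first exact: c_const.
  by apply: c_pred; apply: c_mul; apply: c_comp c_succ c_fst.
split => [s t|s eps e0]; first by rewrite !Hq.
exists 0%N => t _; rewrite Hq fmorphV rmorph_nat /rho0.
by rewrite subrr normr0.
Qed.

Lemma univ_pos (R : realType) (M : bstring -> R) : universal M -> forall s, 0 < M s.
Proof.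
move=> U s; have [c Hc] := U _ (rho0_lce R).
have := lt_le_trans (rho0_gt0 R s) (Hc s).
case: c {Hc} => [|c]; first by rewrite mul0r ltxx.
by rewrite pmulr_rgt0 // ltr0n.
Qed.

Definition facq (s : bstring) : rat := if dz s == [::] then 1 else ((2 ^ lz s)%N%:R)^-1.
Definition fac (R : realType) (s : bstring) : R := if dz s == [::] then 1 else ((2 ^ lz s)%N%:R)^-1.
Definition Mt (R : realType) (M : bstring -> R) (s : bstring) : R := fac R s * M s.

Lemma fac_gt0 (R : realType) s : 0 < fac R s.
Proof. by rewrite /fac; case: ifP => // _; rewrite invr_gt0 ltr0n expn_gt0. Qed.

Lemma fac_le1 (R : realType) s : fac R s <= 1.
Proof.
rewrite /fac; case: ifP => // _.
by rewrite invf_le1 ?ltr0n ?expn_gt0 // ler1n expn_gt0.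
Qed.

Lemma ratr_facq (R : realType) s : ratr (facq s) = fac R s.
Proof. by rewrite /facq /fac; case: ifP => _; rewrite ?rmorph1 // fmorphV rmorph_nat. Qed.

Lemma facq_ge0 s : 0 <= facq s.
Proof. by rewrite /facq; case: ifP => // _; rewrite invr_ge0 ler0n. Qed.

Lemma Mt_semi (R : realType) (M : bstring -> R) : semimeasure M -> semimeasure (Mt M).
Proof.
move=> [H01 [H1 Hs]]; split; [|split].
- move=> s; have /andP [m0 m1] := H01 s; rewrite /Mt mulr_ge0 ?(ltW (fac_gt0 _ _)) //=.
  by rewrite mulr_ile1 ?(ltW (fac_gt0 _ _)) ?fac_le1.
- by rewrite /Mt /fac /= mul1r.
- move=> s; rewrite /Mt; case: (eqVneq (dz s) [::]) => dzs.
    rewrite {3}/fac dzs eqxx mul1r; apply: le_trans (Hs s).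
    have /andP [m0 _] := H01 (rcons s false); have /andP [m1 _] := H01 (rcons s true).
    by apply: lerD; rewrite ler_piMl // fac_le1.
  have [d0 l0] := dz_rcons false dzs; have [d1 l1] := dz_rcons true dzs.
  rewrite /fac (negbTE dzs) (negbTE d0) (negbTE d1) l0 l1 -mulrDr.
  by rewrite ler_wpM2l // invr_ge0 ler0n.
Qed.

Lemma rat_scale m P : (0 < P)%N ->
  rat_of_nat (npair (unpair m).1 (((unpair m).2.+1 * P).-1)) = rat_of_nat m / P%:R.
Proof.
move=> P0; rewrite rat_npair prednK ?muln_gt0 // natrM invfM mulrA.
by rewrite -[in RHS](npair_unpair m) rat_npair.
Qed.

Lemma Mt_lce (R : realType) (M : bstring -> R) : left_ce M -> left_ce (Mt M).
Proof.
move=> [f [Hf [Hmono Hconv]]].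
pose D x := decomp (unpair x).1.+1.
pose f' x := if (unpair (D x)).1 == 1%N then f x
             else npair (unpair (f x)).1 (((unpair (f x)).2.+1 * (unpair (D x)).2).-1).
have Hq : forall s t, rat_of_nat (f' (npair (code s) t)) = facq s * rat_of_nat (f (npair (code s) t)).
  move=> s t; rewrite /f' /D unpair_npair /= decomp_code unpair_npair /= eqSS /facq.
  case: (eqVneq (dz s) [::]) => dzs.
    by rewrite dzs eqxx mul1r.
  have -> : (code (dz s) == 0%N) = false by apply/eqP => /code0; apply/eqP.
  by rewrite rat_scale ?expn_gt0 // mulrC.
exists f'; split.
  have HD : computable D by apply: c_decomp; apply: c_comp c_succ c_fst.
  apply: c_ext (c_ifz (c_eqn (c_comp c_fst HD) (c_const 1)) Hf
      (c_pair (c_comp c_fst Hf) (c_pred (c_mul (c_comp c_succ (c_comp c_snd Hf)) (c_comp c_snd HD))))) => x.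
  by rewrite /f'; case: (_ == 1%N).
split => [s t|s eps e0].
  by rewrite !Hq ler_wpM2l ?facq_ge0 // Hmono.
have [N HN] := Hconv s eps e0; exists N => t Nt.
rewrite Hq.
have -> : ratr (facq s * rat_of_nat (f (npair (code s) t))) =
   fac R s * ratr (rat_of_nat (f (npair (code s) t))) :> R.
  by rewrite rmorphM; congr (_ * _); exact: ratr_facq.
rewrite /Mt -mulrBr normrM ger0_norm ?(ltW (fac_gt0 _ _)) //.
by apply: le_lt_trans (HN t Nt); rewrite ler_piMl ?normr_ge0 ?fac_le1.
Qed.

Lemma dz_witness c : dz (rcons (nseq c false) true) = [:: true] /\ lz (rcons (nseq c false) true) = c.
Proof. by elim: c => [|c [IH1 IH2]] //=; rewrite IH1 IH2. Qed.

Lemma allfalse_dz s : (forall i, (i < size s)%N -> nth false s i = false) -> dz s = [::].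
Proof.
elim: s => [//|b s IH] H.
have := H 0%N isT; rewrite /= => ->; apply: IH => i Hi.
exact: (H i.+1).
Qed.

Lemma lz_prefix s n : (forall i, (i < n)%N -> (i < size s)%N -> nth false s i = false) ->
  ((n < size s)%N -> nth false s n = true) -> (dz s == [::]) || (lz s == n).
Proof.
elim: s n => [//|b s IH] [|n] H1 H2.
  by have := H2 isT; rewrite /= => ->.
have := H1 0%N isT isT; rewrite /= => -> /=; apply: IH.
  by move=> i i1 i2; apply: (H1 i.+1).
by move=> ns; apply: (H2 ns).
Qed.

Lemma prefix_Pc (X : nat -> bool) : exists n, forall s, prefix s X -> Pc n (code s).
Proof.
case: (pselect (exists i, X i)) => [ex|nex].
  have ex' : exists i, X i by [].
  case: (ex_minnP ex') => n Xn nmin; exists n => s ps; rewrite Pc_code.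
  apply: lz_prefix => [i i1 i2|ns].
    rewrite ps //; apply/negbTE/negP => Xi.
    by have := nmin i Xi; rewrite leqNgt i1.
  by rewrite ps.
exists 0%N => s ps; rewrite Pc_code allfalse_dz // => i i1.
rewrite ps //; apply/negbTE/negP => Xi; apply: nex; by exists i.
Qed.

Lemma M_le_Mt (R : realType) (M : bstring -> R) n s : (forall s, 0 <= M s) ->
  Pc n (code s) -> M s <= (2 ^ n)%N%:R * Mt M s.
Proof.
move=> M0; rewrite Pc_code /Mt /fac; case: (eqVneq (dz s) [::]) => dzs /=.
  by rewrite mul1r ler_peMl // ler1n expn_gt0.
move/eqP => ->; rewrite mulrA mulfV ?mul1r // pnatr_eq0 expn_eq0 //.
Qed.
Theorem proposition5p3 (R : realType) (M : bstring -> R) :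
  left_ce_semimeasure M -> universal M ->
  exists Mt : bstring -> R,
    left_ce_semimeasure Mt /\ ~ universal Mt /\
    (forall X, MLR Mt X <-> MLR M X) /\
    (forall X, MLR M X <-> exists rho : bstring -> R,
                              left_ce_semimeasure rho /\ MLR rho X).
Proof.
move=> [[M01 [M1 Ms]] Mlce] Mu.
have M0 : forall s, 0 <= M s by move=> s; have /andP [] := M01 s.
have HMt : left_ce_semimeasure (Mt M) by split; [exact: Mt_semi | exact: Mt_lce].
have Mt0 : forall s, 0 <= Mt M s by move=> s; have [H _] := HMt.1; have /andP [] := H s.
have Htrue : computable (fun c => if (fun _ : nat => true) c then 0%N else 1%N)
  by exact: c_const.
exists (Mt M); split; first exact: HMt.
split.
  move=> U; have [c Hc] := U M (conj (conj M01 (conj M1 Ms)) Mlce).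
  have [d1 l1] := dz_witness c.
  set s := rcons (nseq c false) true.
  have := Hc s; rewrite /Mt /fac d1 l1 /= mulrA.
  have Mpos := univ_pos Mu s.
  rewrite -{1}[M s]mul1r ler_pM2r // => H.
  move: H; rewrite ler_pdivlMr ?ltr0n ?expn_gt0 // mul1r ler_nat.
  by rewrite leqNgt ltn_expl.
split.
  move=> X; split.
    apply: (MLR_transfer (n := 0%N) (Q := fun _ => true)) => //.
    by move=> s _; rewrite expn0 mul1r /Mt ler_piMl // fac_le1.
  have [n Hn] := prefix_Pc X.
  apply: (MLR_transfer (n := n) (Q := Pc n)) => //.
    by apply: c_Pc; exact: c_id.
  by move=> s; apply: M_le_Mt.
move=> X; split => [HX|[rho [Hrho HX]]].
  by exists M; split => //; split.
have [c Hc] := Mu rho Hrho.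
apply: (MLR_transfer (n := c) (Q := fun _ => true) Htrue M0 _ _ HX) => // s _.
apply: le_trans (Hc s) _; apply: ler_wpM2r => //.
by rewrite ler_nat ltnW // ltn_expl.
Qed.
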